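(* If $\sigma(x)/x\in\mathbb{Z}[\zeta_p]$, then the lattice $\varphi_{1/p^2}(M)$ (a rotated version of $D_n$) satisfies $d_{p,\min}(\varphi_{1/p^2}(M))\ge p^{(1-n)/2}$.
   Context: Let $n>1$ be an odd integer and $p$ a prime with $p\equiv 1 \pmod n$. Let $\zeta_p=e^{2\pi i/p}$, let $r$ be a primitive root modulo $p$, and let $\sigma$ be the automorphism of $\mathbb{Q}(\zeta_p)$ with $\sigma(\zeta_p)=\zeta_p^r$. Let $\mathbb{K}=\{y\in\mathbb{Q}(\zeta_p):\sigma^n(y)=y\}$ (totally real of degree $n$, embeddings into $\mathbb{R}$ given by restrictions of $\sigma^0,\dots,\sigma^{n-1}$). Let $\alpha=\prod_{j=0}^{(p-3)/2}(1-\zeta_p^{r^j})$, $\lambda$ an integer with $\lambda(r-1)\equiv1\pmod p$, $z=\zeta_p^{\lambda}\alpha(1-\zeta_p)$, $x=\mathrm{Tr}_{\mathbb{Q}(\zeta_p)/\mathbb{K}}(z)=\sum_{j=1}^{(p-1)/n}\sigma^{jn}(z)$. Let $M$ be the $\mathbb{Z}$-module generated by $x+\sigma(x),\ x-\sigma(x),\ \sigma(x)-\sigma^2(x),\dots,\sigma^{n-2}(x)-\sigma^{n-1}(x)$. For totally positive $\beta\in\mathbb{K}$, $\varphi_\beta(y)=(\sqrt{\sigma^0(\beta)}\sigma^0(y),\dots,\sqrt{\sigma^{n-1}(\beta)}\sigma^{n-1}(y))$. For a lattice $\Lambda\subset\mathbb{R}^n$ with all nonzero vectors having all coordinates nonzero,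 $d_{p,\min}(\Lambda)=\inf\{|y_1\cdots y_n|: 0\neq y\in\Lambda\}$. *)

(* Defs.v *)
From HB Require Import structures.
From mathcomp Require Import all_boot all_order all_algebra all_field.
Unset Printing Implicit Defensive.
Import Order.TTheory GRing.Theory Num.Theory.
Local Open Scope ring_scope.

(* All objects of the paper are polynomial expressions (integer coefficients,
   plus one integral power zeta^lambda) in zeta_p.  For such an expression E(zeta),
   sigma^k(E(zeta)) = E(zeta^(r^k)), since sigma^k is the ring automorphism
   zeta |-> zeta^(r^k).  We therefore define each object as a function of the
   root w that is plugged in. *)

Definition alphaf (p r : nat) (w : algC) : algC :=
  \prod_(j < ((p - 3) %/ 2).+1) (1 - w ^+ (r ^ j)).

Definition zf (p r : nat) (lam : int) (w : algC) : algC :=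
  w ^ lam * alphaf p r w * (1 - w).

(* x = Tr_{Q(zeta)/K}(z) = sum_{j=1}^{(p-1)/n} sigma^(j n)(z) *)
Definition xf (n p r : nat) (lam : int) (w : algC) : algC :=
  \sum_(1 <= j < ((p.-1) %/ n).+1) zf p r lam (w ^+ (r ^ (j * n))).

Definition sigx (n p r : nat) (lam : int) (zeta : algC) (k : nat) : algC :=
  xf n p r lam (zeta ^+ (r ^ k)).

(* sigma^k applied to the i-th generator of M:
   i = 0 : x + sigma(x);  i = 1 : x - sigma(x);
   i >= 2 : sigma^(i-1)(x) - sigma^i(x). *)
Definition genM (n p r : nat) (lam : int) (zeta : algC) (i k : nat) : algC :=
  let X := sigx n p r lam zeta in
  if i == 0%N then X k + X k.+1
  else if i == 1%N then X k - X k.+1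
  else X (i.-1 + k)%N - X (i + k)%N.

Definition sigM (n p r : nat) (lam : int) (zeta : algC) (c : 'I_n -> int) (k : nat)
  : algC := \sum_(i < n) (c i)%:~R * genM n p r lam zeta i k.

(* k-th coordinate of phi_beta(y) = sqrt(sigma^k(beta)) sigma^k(y); beta rational
   is fixed by sigma^k. *)
Definition phiM (beta : algC) (n p r : nat) (lam : int) (zeta : algC)
  (c : 'I_n -> int) (k : 'I_n) : algC :=
  sqrtC beta * sigM n p r lam zeta c k.

Definition in_Zzeta (zeta y : algC) : Prop :=
  exists q : {poly int}, y = (map_poly (fun a : int => a%:~R) q).[zeta].

(* Main.v *)
Require Import Defs.
From HB Require Import structures.
From mathcomp Require Import all_boot all_order all_algebra all_field.
From mathcomp Require Import zify.
Import Order.TTheory GRing.Theory Num.Theory.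
Local Open Scope ring_scope.

Section PolyClass.
Variable p : nat.
Hypothesis p_gt0 : (0 < p)%N.

Definition isP (f : algC -> algC) := exists q : {poly int},
  forall w : algC, w ^+ p = 1 -> f w = (map_poly intr q).[w].

Lemma isP_const (a : int) : isP (fun _ => a%:~R).
Proof. by exists a%:P => w _; rewrite map_polyC hornerC. Qed.

Lemma isP_X : isP (fun w => w).
Proof. by exists 'X => w _; rewrite map_polyX hornerX. Qed.

Lemma isP_ext {f g} : isP f -> (forall w, w ^+ p = 1 -> f w = g w) -> isP g.
Proof. by move=> [q Hq] E; exists q => w hw; rewrite -E // Hq. Qed.

Lemma isP_add {f g} : isP f -> isP g -> isP (fun w => f w + g w).
Proof.
by move=> [q Hq] [s Hs]; exists (q + s) => w hw; rewrite rmorphD hornerD Hq ?Hs.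
Qed.

Lemma isP_opp {f} : isP f -> isP (fun w => - f w).
Proof.
by move=> [q Hq]; exists (- q) => w hw; rewrite rmorphN hornerN Hq.
Qed.

Lemma isP_sub {f g} : isP f -> isP g -> isP (fun w => f w - g w).
Proof. by move=> hf hg; apply: isP_add => //; apply: isP_opp. Qed.

Lemma isP_mul {f g} : isP f -> isP g -> isP (fun w => f w * g w).
Proof.
by move=> [q Hq] [s Hs]; exists (q * s) => w hw; rewrite rmorphM hornerM Hq ?Hs.
Qed.

Lemma isP_sum {I : Type} (s : seq I) (P : pred I) (F : I -> algC -> algC) :
  (forall i, isP (F i)) -> isP (fun w => \sum_(i <- s | P i) F i w).
Proof.
move=> hF; elim: s => [|i s IH].
  by apply: (isP_ext (isP_const 0)) => w _; rewrite big_nil.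
case: (boolP (P i)) => Pi.
  by apply: (isP_ext (isP_add (hF i) IH)) => w _; rewrite big_cons Pi.
by apply: (isP_ext IH) => w _; rewrite big_cons (negbTE Pi).
Qed.

Lemma isP_prod {I : Type} (s : seq I) (P : pred I) (F : I -> algC -> algC) :
  (forall i, isP (F i)) -> isP (fun w => \prod_(i <- s | P i) F i w).
Proof.
move=> hF; elim: s => [|i s IH].
  by apply: (isP_ext (isP_const 1)) => w _; rewrite big_nil.
case: (boolP (P i)) => Pi.
  by apply: (isP_ext (isP_mul (hF i) IH)) => w _; rewrite big_cons Pi.
by apply: (isP_ext IH) => w _; rewrite big_cons (negbTE Pi).
Qed.

Lemma isP_comp {f} m : isP f -> isP (fun w => f (w ^+ m)).
Proof.
move=> [q Hq]; exists (q \Po 'X^m) => w hw.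
rewrite map_comp_poly horner_comp map_polyXn hornerXn Hq //.
by rewrite -exprM mulnC exprM hw expr1n.
Qed.

Lemma unity_neq0 (w : algC) : w ^+ p = 1 -> w != 0.
Proof.
move=> hw; apply/eqP => w0; move: hw; rewrite w0 expr0n eqn0Ngt p_gt0 /=.
by move/eqP; rewrite eq_sym oner_eq0.
Qed.

Lemma exprz_unity (w : algC) (lam : int) : w ^+ p = 1 ->
  w ^ lam = w ^+ `|(lam %% p)%Z|%N.
Proof.
move=> hw; have wU : w \is a GRing.unit by rewrite unitfE unity_neq0.
have hp : (p%:Z != 0) by rewrite eqz_nat -lt0n.
have E : (lam %% p)%Z = `|(lam %% p)%Z|%N by rewrite gez0_abs ?modz_ge0.
rewrite {1}(divz_eq lam p) exprzDr // {1}E (mulrC (lam %/ p)%Z) -exprz_exp.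
by have -> : w ^ p%:Z = w ^+ p by []; rewrite hw exp1rz mul1r.
Qed.

Lemma isP_exprz (lam : int) : isP (fun w => w ^ lam).
Proof.
exists ('X^`|(lam %% p)%Z|%N) => w hw; rewrite map_polyXn hornerXn.
exact: exprz_unity.
Qed.

Lemma isP_one : isP (fun _ => 1).
Proof. exact: (isP_ext (isP_const 1)). Qed.

Variables (n r : nat) (lam : int).

Lemma isP_alpha : isP (alphaf p r).
Proof.
apply: (isP_ext (isP_prod (index_enum 'I_((p - 3) %/ 2).+1) xpredT
   (fun j w => 1 - w ^+ (r ^ j)) _)) => // j.
exact: (isP_sub isP_one (isP_comp (r ^ j) isP_X)).
Qed.

Lemma isP_zf : isP (zf p r lam).
Proof.
exact: (isP_mul (isP_mul (isP_exprz lam) isP_alpha) (isP_sub isP_one isP_X)).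
Qed.

Lemma isP_xf : isP (xf n p r lam).
Proof.
apply: (isP_ext (isP_sum (index_iota 1 ((p.-1) %/ n).+1) xpredT
   (fun j w => zf p r lam (w ^+ (r ^ (j * n)))) _)) => // j.
exact: (isP_comp _ isP_zf).
Qed.

Lemma isP_sigx k : isP (fun w => sigx n p r lam w k).
Proof. exact: (isP_comp _ isP_xf). Qed.

Lemma isP_genM i k : isP (fun w => genM n p r lam w i k).
Proof.
rewrite /genM /=; case: (i == 0)%N; first exact: (isP_add (isP_sigx _) (isP_sigx _)).
case: (i == 1)%N; first exact: (isP_sub (isP_sigx _) (isP_sigx _)).
exact: (isP_sub (isP_sigx _) (isP_sigx _)).
Qed.

Lemma isP_sigM c k : isP (fun w => sigM n p r lam w c k).
Proof.
apply: (isP_ext (isP_sum (index_enum 'I_n) xpredT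
   (fun i w => (c i)%:~R * genM n p r lam w i k) _)) => // i.
exact: (isP_mul (isP_const _) (isP_genM _ _)).
Qed.

Definition FF c (w : algC) := \prod_(k < n) sigM n p r lam w c k.

Lemma isP_FF c : isP (FF c).
Proof.
apply: (isP_ext (isP_prod (index_enum 'I_n) xpredT
   (fun k w => sigM n p r lam w c k) _)) => // k.
exact: isP_sigM.
Qed.


Variable zeta : algC.
Hypothesis pz : p.-primitive_root zeta.

Lemma zeta_p : zeta ^+ p = 1.
Proof. exact: prim_expr_order. Qed.

Lemma geo_int i : \sum_(a < p) (zeta ^+ i) ^+ a \in Num.int.
Proof.
have [e1|ne1] := eqVneq (zeta ^+ i) 1.
  by rewrite e1 (eq_bigr (fun _ => 1)) => [|a _]; rewrite ?expr1n // sumr_const card_ord rpred_nat.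
have : (zeta ^+ i - 1) * \sum_(a < p) (zeta ^+ i) ^+ a = 0.
  by rewrite -subrX1 -exprM mulnC exprM zeta_p expr1n subrr.
by move/eqP; rewrite mulf_eq0 subr_eq0 (negbTE ne1) /= => /eqP ->; rewrite rpred0.
Qed.

Lemma trace_int (q : {poly int}) :
  \sum_(a < p) (map_poly intr q).[zeta ^+ a] \in Num.int.
Proof.
under eq_bigr => a _ do rewrite horner_coef.
rewrite exchange_big /=; apply: rpred_sum => i _.
under eq_bigr => a _ do rewrite -exprM mulnC exprM.
rewrite -mulr_sumr; apply: rpredM; last exact: geo_int.
by rewrite coef_map /= rpred_int.
Qed.

Lemma Aint_pol (q : {poly int}) : (map_poly intr q).[zeta] \in Aint.
Proof.
rewrite horner_coef; apply: rpred_sum => i _; apply: rpredM.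
  by rewrite coef_map Aint_int.
by apply: rpredX; exact: Aint_prim_root pz.
Qed.


Hypothesis pr : prime p.
Hypothesis hr : (p.-1).-primitive_root (r%:R : 'F_p).
Hypothesis ndiv : (n %| p.-1)%N.
Hypothesis n_gt0 : (0 < n)%N.

Lemma r_fermat : (r ^ p.-1 %% p = 1)%N.
Proof.
have := prim_expr_order hr; rewrite -natrX => /(congr1 val).
by rewrite /= !val_Fp_nat // modn_small // prime_gt1.
Qed.

Lemma unity_r_fermat (v : algC) : v ^+ p = 1 -> v ^+ (r ^ p.-1) = v.
Proof. by move=> hv; rewrite -(expr_mod _ hv) r_fermat expr1. Qed.

Lemma xf_period (v : algC) : v ^+ p = 1 -> xf n p r lam (v ^+ (r ^ n)) = xf n p r lam v.
Proof.
move=> hv; rewrite /xf.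
have e_gt0 : (0 < (p.-1) %/ n)%N.
  by rewrite divn_gt0 // dvdn_leq // -subn1 subn_gt0 prime_gt1.
under eq_bigr => j _ do rewrite -exprM -expnD -mulSn.
set E := ((p.-1) %/ n)%N in e_gt0 *.
have EN : (E * n = p.-1)%N by rewrite divnK.
case: E e_gt0 EN => [//|e] _ EN.
rewrite [LHS]big_nat_recr // [RHS]big_nat_recl //= addrC; congr (_ + _).
rewrite mulSn expnD exprM EN mul1n unity_r_fermat //.
by rewrite -exprM mulnC exprM hv expr1n.
Qed.

Lemma sigx_shift (w : algC) k : sigx n p r lam (w ^+ r) k = sigx n p r lam w k.+1.
Proof. by rewrite /sigx -exprM expnS. Qed.

Lemma sigx_period (w : algC) k : w ^+ p = 1 -> sigx n p r lam w (k + n) = sigx n p r lam w k.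
Proof.
move=> hw; rewrite /sigx expnD exprM xf_period //.
by rewrite -exprM mulnC exprM hw expr1n.
Qed.

Lemma sigM_shift (w : algC) c k : sigM n p r lam (w ^+ r) c k = sigM n p r lam w c k.+1.
Proof.
apply: eq_bigr => i _; congr (_ * _); rewrite /genM /=.
by rewrite !sigx_shift !addnS.
Qed.

Lemma sigM_period (w : algC) c : w ^+ p = 1 -> sigM n p r lam w c n = sigM n p r lam w c 0.
Proof.
move=> hw; apply: eq_bigr => i _; congr (_ * _); rewrite /genM /=.
have h0 := sigx_period w 0 hw; have h1 := sigx_period w 1 hw.
rewrite add0n in h0; rewrite add1n in h1.
by rewrite h0 h1 !sigx_period ?addn0.
Qed.

Lemma prod_cyc (g : nat -> algC) m : (0 < m)%N -> g m = g 0 ->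
  \prod_(k < m) g k.+1 = \prod_(k < m) g k.
Proof.
case: m => [//|m] _ hm.
by rewrite big_ord_recr big_ord_recl /= hm mulrC.
Qed.

Lemma FF_shift c (w : algC) : w ^+ p = 1 -> FF c (w ^+ r) = FF c w.
Proof.
move=> hw; rewrite /FF; under eq_bigr => k _ do rewrite sigM_shift.
rewrite (prod_cyc (fun k => sigM n p r lam w c k)) ?sigM_period //.
Qed.


Lemma FF_iter c j (w : algC) : w ^+ p = 1 -> FF c (w ^+ (r ^ j)) = FF c w.
Proof.
move=> hw; elim: j => [|j IH]; first by rewrite expn0 expr1.
rewrite expnSr exprM FF_shift //.
by rewrite -exprM mulnC exprM hw expr1n.
Qed.

Lemma coprime_pow a : coprime p a -> exists j, (a %% p = r ^ j %% p)%N.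
Proof.
move=> ca; pose x := (a%:R : 'F_p).
have xU : x != 0 by rewrite -unitfE /x unitFpE.
have x1 : x ^+ p.-1 = 1.
  apply: (mulfI xU); rewrite mulr1 -exprS prednK ?prime_gt0 //.
  by have := expf_card x; rewrite card_Fp.
have [i Ei] := prim_rootP hr x1.
exists i; move: Ei; rewrite /x -natrX => /(congr1 val).
by rewrite /= !val_Fp_nat.
Qed.

Lemma FF_conj c a : coprime p a -> FF c (zeta ^+ a) = FF c zeta.
Proof.
move=> /coprime_pow [j Ej].
by rewrite -(prim_expr_mod pz) Ej (prim_expr_mod pz) FF_iter // zeta_p.
Qed.

Lemma FF_int c : FF c zeta \in Num.int.
Proof.
have [q Hq] := isP_FF c.
have hS := trace_int q.
have up : forall a, (zeta ^+ a) ^+ p = 1.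
  by move=> a; rewrite -exprM mulnC exprM zeta_p expr1n.
rewrite (eq_bigr (fun a : 'I_p => FF c (zeta ^+ a))) in hS; last by move=> a _; rewrite Hq.
have p1 : p = (p.-1).+1 by rewrite prednK ?prime_gt0.
move: hS; rewrite p1 big_ord_recl /=.
rewrite (eq_bigr (fun _ => FF c zeta)); last first.
  move=> a _; apply: FF_conj; rewrite prime_coprime // /bump /= add1n gtnNdvd //.
  by rewrite [X in (_ < X)%N]p1 ltnS.
rewrite sumr_const card_ord expr0 => hS.
have h1 : FF c 1 \in Num.int.
  rewrite Hq ?expr1n // -(rmorph1 (intr : int -> algC)) horner_map rpred_int //.
have hQ : FF c zeta \in Crat.
  have -> : FF c zeta = (FF c 1 + FF c zeta *+ p.-1 - FF c 1) / (p.-1)%:R.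
    rewrite addrC addKr -mulr_natr mulfK // pnatr_eq0 -lt0n.
    by rewrite -ltnS -p1 prime_gt1.
  by rewrite rpred_div ?rpred_nat // rpredB // rpred_int_num.
apply: Cint_rat_Aint => //; rewrite Hq ?zeta_p //; exact: Aint_pol.
Qed.


Lemma aut_pol (nu : {rmorphism algC -> algC}) (q : {poly int}) x :
  nu ((map_poly intr q).[x]) = (map_poly intr q).[nu x].
Proof.
rewrite -horner_map -map_poly_comp; congr (_.[_]).
by apply: eq_map_poly => a /=; rewrite rmorph_int.
Qed.

Lemma coprime_rp k : coprime (r ^ k) p.
Proof.
rewrite coprime_sym; apply: coprimeXr; rewrite prime_coprime //.
apply/negP => /dvdnP [m Em]; have := prim_expr_order hr.
rewrite Em natrM pchar_Fp_0 // mulr0 expr0n.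
by case: (p.-1) (prim_order_gt0 hr) => [//|k'] _ /eqP; rewrite eq_sym oner_eq0.
Qed.

Lemma sigM_iter (w : algC) c k : sigM n p r lam w c k = sigM n p r lam (w ^+ (r ^ k)) c 0.
Proof.
elim: k w => [|k IH] w; first by rewrite expn0 expr1.
by rewrite -sigM_shift IH -exprM expnS.
Qed.

Lemma FF_neq0 c : (exists k : 'I_n, sigM n p r lam zeta c k != 0) -> FF c zeta != 0.
Proof.
move=> [k0 hk0].
have [q Hq] := isP_sigM c 0.
have up : forall a, (zeta ^+ a) ^+ p = 1.
  by move=> a; rewrite -exprM mulnC exprM zeta_p expr1n.
have [nu0 Hnu0] := Qn_aut_exists (coprime_rp k0).
have G0 : sigM n p r lam zeta c 0 != 0.
  apply: contraNneq hk0 => h; rewrite sigM_iter Hq // -(Hnu0 zeta zeta_p).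
  by rewrite -aut_pol -Hq ?zeta_p // h rmorph0.
apply/prodf_neq0 => k _; rewrite sigM_iter.
have [nu Hnu] := Qn_aut_exists (coprime_rp k).
by rewrite Hq // -(Hnu zeta zeta_p) -aut_pol -Hq ?zeta_p // fmorph_eq0.
Qed.


Definition pi := 1 - zeta.
Definition Dv m (x : algC) := exists2 W, W \in Aint & x = pi ^+ m * W.

Lemma Dv_add m x y : Dv m x -> Dv m y -> Dv m (x + y).
Proof. by move=> [a ha ->] [b hb ->]; exists (a + b); rewrite ?rpredD ?mulrDr. Qed.

Lemma Dv_opp m x : Dv m x -> Dv m (- x).
Proof. by move=> [a ha ->]; exists (- a); rewrite ?rpredN ?mulrN. Qed.

Lemma Dv_sub m x y : Dv m x -> Dv m y -> Dv m (x - y).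
Proof. by move=> hx hy; apply: Dv_add => //; apply: Dv_opp. Qed.

Lemma Dv_mul a b x y : Dv a x -> Dv b y -> Dv (a + b) (x * y).
Proof.
move=> [u hu ->] [v hv ->]; exists (u * v); first by rewrite rpredM.
by rewrite exprD; rewrite -!mulrA; congr (_ * _); rewrite mulrCA.
Qed.

Lemma Dv_A x : x \in Aint -> Dv 0 x.
Proof. by move=> hx; exists x; rewrite ?expr0 ?mul1r. Qed.

Lemma Dv_zmul m (k : int) x : Dv m x -> Dv m (k%:~R * x).
Proof. by move=> hx; rewrite -[m]add0n; apply: Dv_mul => //; apply: Dv_A; apply: Aint_int. Qed.

Lemma Dv_sum m {I : Type} (s : seq I) (P : pred I) (F : I -> algC) :
  (forall i, Dv m (F i)) -> Dv m (\sum_(i <- s | P i) F i).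
Proof.
move=> hF; elim: s => [|i s IH]; first by rewrite big_nil; exists 0; rewrite ?rpred0 ?mulr0.
by rewrite big_cons; case: (P i) => //; apply: Dv_add.
Qed.

Lemma Dv_prod m K (F : nat -> algC) :
  (forall i, Dv m (F i)) -> Dv (K * m) (\prod_(i < K) F i).
Proof.
move=> hF; elim: K => [|K IH]; first by rewrite big_ord0; apply: Dv_A; apply: Aint1.
by rewrite big_ord_recr mulSn addnC; apply: Dv_mul.
Qed.

Lemma zeta_A k : zeta ^+ k \in Aint.
Proof. by apply: rpredX; exact: Aint_prim_root pz. Qed.

Lemma Dv_one_sub k : Dv 1 (1 - zeta ^+ k).
Proof.
exists (\sum_(i < k) zeta ^+ i); first by apply: rpred_sum => i _; exact: zeta_A.
by rewrite expr1 /pi -opprB subrX1 -mulNr opprB.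
Qed.

Let mm := (((p - 3) %/ 2).+1 + 1)%N.

Lemma Dv_zf b : Dv mm (zf p r lam (zeta ^+ b)).
Proof.
rewrite /zf /mm; apply: Dv_mul; last exact: Dv_one_sub.
rewrite -[X in Dv X](add0n); apply: Dv_mul.
  apply: Dv_A; rewrite exprz_unity; first by rewrite -exprM; exact: zeta_A.
  by rewrite -exprM mulnC exprM zeta_p expr1n.
rewrite /alphaf -[X in Dv X]muln1.
by apply: (Dv_prod 1 _ (fun j => 1 - zeta ^+ b ^+ (r ^ j))) => j; rewrite -exprM; exact: Dv_one_sub.
Qed.

Lemma Dv_sigx k : Dv mm (sigx n p r lam zeta k).
Proof.
rewrite /sigx /xf; apply: Dv_sum => j; rewrite -exprM; exact: Dv_zf.
Qed.

Lemma Dv_sigM c k : Dv mm (sigM n p r lam zeta c k).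
Proof.
rewrite /sigM; apply: Dv_sum => i; apply: Dv_zmul; rewrite /genM /=.
case: (nat_of_ord i == 0)%N; first by apply: Dv_add; apply: Dv_sigx.
by case: (nat_of_ord i == 1)%N; apply: Dv_sub; apply: Dv_sigx.
Qed.

Lemma Dv_FF c : Dv (n * mm) (FF c zeta).
Proof.
rewrite /FF.
have := Dv_prod mm n (fun k => sigM n p r lam zeta c k) (fun k => Dv_sigM c k).
by [].
Qed.


Lemma p_prod : (p%:R : algC) = \prod_(1 <= i < p) (1 - zeta ^+ i).
Proof.
have E := factor_Xn_sub_1 pz.
rewrite big_ltn ?prime_gt0 // expr0 polyC1 subrX1 in E.
have nz : ('X - 1 : {poly algC}) != 0 by rewrite -polyC1 polyXsubC_eq0.
have := congr1 (horner^~ 1) (mulfI nz E); rewrite /= horner_prod horner_sum.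
under eq_bigr => i _ do rewrite hornerXsubC.
under [in RHS]eq_bigr => i _ do rewrite hornerXn expr1n.
by rewrite sumr_const card_ord => ->.
Qed.

Lemma fermat_nat a : coprime p a -> (a ^ p.-1 %% p = 1)%N.
Proof.
move=> ca; pose x := (a%:R : 'F_p).
have xU : x != 0 by rewrite -unitfE /x unitFpE.
have x1 : x ^+ p.-1 = 1.
  apply: (mulfI xU); rewrite mulr1 -exprS prednK ?prime_gt0 //.
  by have := expf_card x; rewrite card_Fp.
move: x1; rewrite /x -natrX => /(congr1 val).
by rewrite /= !val_Fp_nat // modn_small // prime_gt1.
Qed.

Lemma inv_mod i : (0 < i < p)%N -> exists b, (i * b %% p = 1)%N.
Proof.
move=> /andP [i0 ip].
have ci : coprime p i by rewrite prime_coprime // gtnNdvd.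
exists (i ^ p.-2)%N; rewrite -expnS.
have -> : (p.-2).+1 = p.-1 by rewrite prednK // -subn1 subn_gt0 prime_gt1.
exact: fermat_nat.
Qed.



Lemma one_sub_fact (x : algC) b : 1 - x ^+ b = (1 - x) * \sum_(j < b) x ^+ j.
Proof. by rewrite -opprB subrX1 -mulNr opprB. Qed.

Lemma pi_pow : exists2 V, V \in Aint & pi ^+ p.-1 = p%:R * V.
Proof.
pose u i := \sum_(j < i ^ p.-2) (zeta ^+ i) ^+ j.
exists (\prod_(1 <= i < p) u i).
  by apply: rpred_prod => i _; apply: rpred_sum => j _; rewrite -exprM; exact: zeta_A.
rewrite p_prod -big_split /= -subn1 -prodr_const_nat.
rewrite !big_nat; apply: eq_bigr => i /andP [i0 ip].
rewrite /u -one_sub_fact -exprM -expnS.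
have -> : (p.-2).+1 = p.-1 by rewrite prednK // -subn1 subn_gt0 prime_gt1.
rewrite -(prim_expr_mod pz) fermat_nat ?expr1 //.
by rewrite prime_coprime // gtnNdvd.
Qed.


Lemma int_div_p (g : algC) : g \in Num.int -> g ^+ p.-1 / p%:R \in Num.int ->
  exists2 g', g' \in Num.int & g = p%:R * g'.
Proof.
move=> /intrP [gz ->] /intrP [kz hk].
have pn0 : (p%:R : algC) != 0 by rewrite pnatr_eq0 -lt0n prime_gt0.
have E : gz ^+ p.-1 = kz * p%:Z.
  apply: (@intr_inj algC); rewrite rmorphXn rmorphM /= -hk.
  by have -> : ((p%:Z)%:~R : algC) = p%:R by []; rewrite mulfVK.
have : (p%:Z %| gz)%Z.
  have : (p%:Z %| gz ^+ p.-1)%Z by apply/dvdzP; exists kz.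
  rewrite !dvdzE abszX Euclid_dvdX //; by case/andP.
move/dvdzP => [q ->]; exists q%:~R; first by rewrite rpred_int.
by rewrite rmorphM /= mulrC.
Qed.

Lemma pi_A : pi \in Aint.
Proof. by rewrite /pi rpredB ?Aint1 // -[zeta]expr1 zeta_A. Qed.

Lemma step_div {Q N s} : Dv N Q -> ((p.-1) * s < N)%N -> forall g, g \in Num.int ->
  Q = p%:R ^+ s * g -> exists2 g', g' \in Num.int & g = p%:R * g'.
Proof.
move=> [W hW EQ] hs g gi Eg.
have [V hV EV] := pi_pow.
have pn0 : (p%:R : algC) != 0 by rewrite pnatr_eq0 -lt0n prime_gt0.
set d := (N - (p.-1) * s)%N.
have hN : N = ((d.-1).+1 + (p.-1) * s)%N by rewrite prednK ?subnK ?subn_gt0 // ltnW.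
have Eg2 : g = pi * (pi ^+ d.-1 * V ^+ s * W).
  apply: (mulfI (expf_neq0 s pn0)); rewrite -Eg EQ hN exprD exprM EV exprMn.
  by rewrite exprS !mulrA; congr (_ * _ * _); rewrite mulrC mulrA.
apply: int_div_p => //.
apply: Cint_rat_Aint.
  by rewrite rpred_div ?rpred_nat // rpredX // rpred_int_num.
rewrite Eg2 exprMn EV mulrAC [p%:R * V]mulrC mulfK //.
by rewrite rpredM // rpredX // rpredM // ?rpredX // ?rpredM // ?rpredX // pi_A.
Qed.

Lemma iter_div {Q N} : Dv N Q -> Q \in Num.int -> forall s, ((p.-1) * s < N)%N ->
  exists2 g, g \in Num.int & Q = p%:R ^+ s.+1 * g.
Proof.
move=> hD hQ; elim => [|s IH] hs.
  have [g' hg' E] := step_div hD hs _ hQ (esym (mul1r Q)).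
  by exists g' => //; rewrite expr1.
have hs' : ((p.-1) * s < N)%N.
  by apply: leq_ltn_trans hs; rewrite leq_mul2l ltnW ?orbT.
have [g hg E] := IH hs'.
have [g' hg' E'] := step_div hD hs _ hg E.
by exists g' => //; rewrite E E' mulrA -exprSr.
Qed.


Lemma main_bound c : (exists k : 'I_n, sigM n p r lam zeta c k != 0) -> odd n -> (1 < n)%N ->
  (p%:R : algC) ^- ((n - 1) %/ 2) <=
    `| \prod_(k < n) phiM ((p%:R ^+ 2)^-1) n p r lam zeta c k |.
Proof.
move=> hex odn n1.
have hQ := FF_int c; have hnz := FF_neq0 c hex; have hD := Dv_FF c.
have podd : odd p.
  case: (even_prime pr) => // p2; move: ndiv n1; rewrite p2 /= dvdn1 => /eqP ->.
  by [].
set s := ((n - 1) %/ 2)%N.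
have hs : ((p.-1) * s < n * mm)%N.
  have hp := odd_double_half p; have hn := odd_double_half n.
  rewrite podd odn /= in hp hn.
  have hP : (0 < p./2)%N.
    by case: (p./2) hp (prime_gt1 pr) => [|//] <-.
  rewrite /s /mm -hp -hn; nia.
have [g hg EQ] := iter_div hD hQ s hs.
have gnz : g != 0 by apply: contraNneq hnz; rewrite EQ => ->; rewrite mulr0.
have pn0 : (0 < (p%:R : algC)) by rewrite ltr0n prime_gt0.
rewrite /phiM big_split /= prodr_const card_ord -/(FF c zeta) EQ.
rewrite -exprVn sqrCK ?invr_ge0 ?ler0n //.
have nE : n = (s.+1 + s)%N.
  have hn := odd_double_half n; rewrite odn /= in hn.
  rewrite /s -{1 3}hn; nia.
rewrite [in p%:R^-1 ^+ n]nE exprD.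
have -> : p%:R^-1 ^+ s.+1 * p%:R^-1 ^+ s * (p%:R ^+ s.+1 * g) = p%:R^-1 ^+ s * g.
  rewrite [_ * p%:R^-1 ^+ s]mulrC -mulrA; congr (_ * _).
  by rewrite exprVn mulKf // expf_neq0 // gt_eqF.
rewrite normrM normrX ger0_norm ?invr_ge0 ?ler0n // exprVn.
by apply: ler_peMr; rewrite ?invr_ge0 ?exprn_ge0 ?ler0n // norm_intr_ge1.
Qed.

End PolyClass.

Theorem corollary2 (n p r : nat) (lam : int) (zeta : algC) :
  odd n -> (1 < n)%N -> prime p -> p = 1 %[mod n] ->
  (p.-1).-primitive_root (r%:R : 'F_p) ->
  (lam * (r%:Z - 1) = 1 %[mod p%:Z])%Z ->
  p.-primitive_root zeta ->
  in_Zzeta zeta (sigx n p r lam zeta 1 / sigx n p r lam zeta 0) ->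
  forall c : 'I_n -> int,
    (exists k : 'I_n, phiM ((p%:R ^+ 2)^-1) n p r lam zeta c k != 0) ->
    (p%:R : algC) ^- ((n - 1) %/ 2) <=
      `| \prod_(k < n) phiM ((p%:R ^+ 2)^-1) n p r lam zeta c k |.
Proof.
move=> odn n1 pr pmod hr _ pz _ c [k hk].
have ndiv : (n %| p.-1)%N.
  by rewrite -subn1 -eqn_mod_dvd ?prime_gt0 // pmod.
apply: (main_bound _ (prime_gt0 pr) _ _ lam _ pz pr hr ndiv (ltnW n1)) => //.
by exists k; apply: contraNneq hk => h; rewrite /phiM h mulr0.
Qed.
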